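(* Let $H$ be a separable $\omega_1$-collapsible topological group. Then every subspace of $H$ of cardinality at most $\omega_1$ is Lindel\''of.
   Context: All spaces are regular. A topological group $H$ is $\omega_1$-collapsible if for every closed normal subgroup $N$ of $H$, $\psi(H/N)\le\omega_1$ implies that $H/N$ is metrizable. Here $\psi(Z)=\sup_{z\in Z}\psi(Z,z)$, where $\psi(Z,z)$ is the least cardinality of a family $\mathcal U$ of open neighbourhoods of $z$ with $\bigcap\mathcal U=\{z\}$. *)

(* Defs.v *)
From HB Require Import structures.
From mathcomp Require Import all_boot all_order all_algebra.
From mathcomp Require Import all_classical all_reals all_analysis.
From Stdlib Require Import Rdefinitions.

Set Implicit Arguments.
Unset Strict Implicit.
Unset Printing Implicit Defensive.

Local Open Scope classical_set_scope.

(* |A| <= omega_1 iff A carries a well-ordering all of whose proper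
   initial segments are countable (its order type is then <= omega_1). *)
Definition card_le_omega1 (X : Type) (A : set X) : Prop :=
  exists r : X -> X -> Prop,
    (forall a, A a -> ~ r a a) /\
    (forall a b c, A a -> A b -> A c -> r a b -> r b c -> r a c) /\
    (forall a b, A a -> A b -> a = b \/ r a b \/ r b a) /\
    (forall B : set X, B `<=` A -> B !=set0 ->
        exists2 m, B m & forall b, B b -> ~ r b m) /\
    (forall a, A a -> countable [set b | A b /\ r b a]).

Definition topological_group (T : topologicalType)
  (mul : T -> T -> T) (inv : T -> T) (one : T) : Prop :=
  [/\ (forall x y z, mul x (mul y z) = mul (mul x y) z),
      (forall x, mul one x = x),
      (forall x, mul (inv x) x = one),
      continuous (fun p : T * T => mul p.1 p.2) &
      continuous inv].

Definition closed_normal_subgroup (T : topologicalType)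
  (mul : T -> T -> T) (inv : T -> T) (one : T) (N : set T) : Prop :=
  [/\ N one,
      (forall x y, N x -> N y -> N (mul x y)),
      (forall x, N x -> N (inv x)),
      (forall g n, N n -> N (mul (mul g n) (inv g))) &
      closed N].

Definition lcoset (T : Type) (mul : T -> T -> T) (g : T) (N : set T) : set T :=
  [set mul g n | n in N].

Definition coset_space (T : topologicalType) (mul : T -> T -> T) (N : set T)
  : Type := {A : set T | exists g, A = lcoset mul g N}.

HB.instance Definition _ (T : topologicalType) (mul : T -> T -> T) (N : set T) :=
  gen_eqMixin (coset_space mul N).
HB.instance Definition _ (T : topologicalType) (mul : T -> T -> T) (N : set T) :=
  gen_choiceMixin (coset_space mul N).

Definition coset_proj (T : topologicalType) (mul : T -> T -> T) (N : set T)
  (g : T) : coset_space mul N :=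
  exist _ (lcoset mul g N) (ex_intro _ g erefl).

Definition coset_open (T : topologicalType) (mul : T -> T -> T) (N : set T)
  (U : set (coset_space mul N)) : Prop :=
  open (coset_proj mul N @^-1` U).

Lemma coset_openT (T : topologicalType) (mul : T -> T -> T) (N : set T) :
  @coset_open T mul N setT.
Proof. by rewrite /coset_open preimage_setT; exact: openT. Qed.

Lemma coset_openI (T : topologicalType) (mul : T -> T -> T) (N : set T) :
  setI_closed (@coset_open T mul N).
Proof. by move=> A B oA oB; rewrite /coset_open preimage_setI; exact: openI. Qed.

Lemma coset_open_bigU (T : topologicalType) (mul : T -> T -> T) (N : set T)
  (I : Type) (f : I -> set (coset_space mul N)) :
  (forall i, @coset_open T mul N (f i)) -> @coset_open T mul N (\bigcup_i f i).
Proof.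
move=> ofi; rewrite /coset_open preimage_bigcup.
by apply: bigcup_open => i _; exact: ofi.
Qed.

HB.instance Definition _ (T : topologicalType) (mul : T -> T -> T) (N : set T) :=
  isOpenTopological.Build (coset_space mul N)
    (@coset_openT T mul N) (@coset_openI T mul N) (@coset_open_bigU T mul N).

Definition pseudocharacter_le_omega1 (Z : topologicalType) : Prop :=
  forall z : Z, exists F : set (set Z),
    [/\ card_le_omega1 F,
        (forall U, F U -> open U /\ U z) &
        \bigcap_(U in F) U = [set z]].

Definition metrizable (Z : topologicalType) : Prop :=
  exists d : Z -> Z -> R,
    [/\ (forall x y, (0 <= d x y)%R),
        (forall x y, d x y = 0%R <-> x = y),
        (forall x y, d x y = d y x),
        (forall x y z, (d x z <= d x y + d y z)%R) &
        (forall U : set Z, open U <->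
           forall x, U x -> exists2 e : R, (0 < e)%R &
             [set y | (d x y < e)%R] `<=` U)].

Definition omega1_collapsible (T : topologicalType)
  (mul : T -> T -> T) (inv : T -> T) (one : T) : Prop :=
  forall N : set T, closed_normal_subgroup mul inv one N ->
    pseudocharacter_le_omega1 (coset_space mul N) ->
    metrizable (coset_space mul N).

Definition separable (T : topologicalType) : Prop :=
  exists2 D : set T, countable D & dense D.

(* the subspace A of T is Lindelof: every cover of A by open sets of T
   (equivalently, by open sets of the subspace) has a countable subcover *)
Definition lindelof_subspace (T : topologicalType) (A : set T) : Prop :=
  forall (I : Type) (U : I -> set T), (forall i, open (U i)) ->
    A `<=` \bigcup_i U i ->
    exists2 J : set I, countable J & A `<=` \bigcup_(i in J) U i.

(* Main.v *)
Require Import Defs.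
From mathcomp Require Import all_boot all_order all_algebra.
From mathcomp Require Import all_classical all_reals all_analysis.
From Stdlib Require Import Reals Lra.

Local Open Scope classical_set_scope.

Section Grp.
Context {H : topologicalType} {mul : H -> H -> H} {inv : H -> H} {one : H}.
Hypothesis TG : topological_group mul inv one.
Local Notation "x * y" := (mul x y).

Lemma gA x y z : x * (y * z) = (x * y) * z. Proof. by case: TG. Qed.
Lemma g1l x : one * x = x. Proof. by case: TG. Qed.
Lemma gVl x : inv x * x = one. Proof. by case: TG. Qed.
Lemma gVr x : x * inv x = one.
Proof.
have e1 : x * inv x = inv (inv x) * inv x * (x * inv x) by rewrite gVl g1l.
rewrite e1 -gA (gA (inv x) x) gVl g1l; exact: gVl.
Qed.
Lemma g1r x : x * one = x. Proof. by rewrite -(gVl x) gA gVr g1l. Qed.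
Lemma gKl x y : inv x * (x * y) = y. Proof. by rewrite gA gVl g1l. Qed.
Lemma gKVl x y : x * (inv x * y) = y. Proof. by rewrite gA gVr g1l. Qed.
Lemma gKr x y : (y * x) * inv x = y. Proof. by rewrite -gA gVr g1r. Qed.
Lemma gKVr x y : (y * inv x) * x = y. Proof. by rewrite -gA gVl g1r. Qed.
Lemma gVK x : inv (inv x) = x.
Proof. by rewrite -[inv (inv x)]g1r -(gVl x) gA gVl g1l. Qed.
Lemma g_invu a b : a * b = one -> a = inv b.
Proof. by move=> e; rewrite -[a]g1r -(gVr b) gA e g1l. Qed.
Lemma gVM x y : inv (x * y) = inv y * inv x.
Proof. by apply/esym/g_invu; rewrite -gA gKl gVl. Qed.
Lemma gV1 : inv one = one. Proof. by rewrite -[inv one]g1l gVr. Qed.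

Lemma mul_cont : continuous (fun p : H * H => p.1 * p.2). Proof. by case: TG. Qed.
Lemma inv_cont : continuous inv. Proof. by case: TG. Qed.

Lemma lmul_cont c : continuous (fun y => c * y).
Proof.
move=> y; apply: (continuous_comp (f := fun y => (c, y)) _ (mul_cont (c, y))).
exact: cvg_pair (cvg_cst _) cvg_id.
Qed.
Lemma rmul_cont c : continuous (fun y => y * c).
Proof.
move=> y; apply: (continuous_comp (f := fun y => (y, c)) _ (mul_cont (y, c))).
exact: cvg_pair cvg_id (cvg_cst _).
Qed.

Lemma open_pre (f : H -> H) (Ug : set H) : continuous f -> open Ug -> open (f @^-1` Ug).
Proof. by move=> cf oU; apply: open_comp => // x _; exact: cf. Qed.

End Grp.


Section Nb.
Context {H : topologicalType} {mul : H -> H -> H} {inv : H -> H} {one : H}.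
Hypothesis TG : topological_group mul inv one.
Local Notation "x * y" := (mul x y).

Lemma nbhs_sq (V : set H) : open V -> V one ->
  exists W, [/\ open W, W one & forall a b, W a -> W b -> V (a * b)].
Proof.
move=> oV V1.
have : nbhs (one, one) ((fun p : H * H => p.1 * p.2) @^-1` V).
  have h := mul_cont TG (one, one); apply: h => /=; rewrite (g1l TG).
  by apply: open_nbhs_nbhs; split.
move=> [[P Q] [/= nP nQ] sPQ].
exists (P° `&` Q°); split.
- by apply: openI; exact: open_interior.
- by split; apply: nbhs_singleton; apply: nbhs_interior.
- move=> a b [Pa _] [_ Qb]; apply: (sPQ (a, b)); split; exact: interior_subset.
Qed.

Definition conjpre (e : H) (V : set H) := [set x | V (e * x * inv e)].

Lemma open_conjpre e V : open V -> open (conjpre e V).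
Proof.
move=> oV; rewrite /conjpre.
have -> : [set x | V (e * x * inv e)] =
   (fun x => e * x) @^-1` ((fun y => y * inv e) @^-1` V) by [].
apply: open_pre; first exact: (lmul_cont TG).
by apply: open_pre => //; exact: (rmul_cont TG).
Qed.

Fixpoint Cs (e : nat -> H) (V : set H) (k : nat) : set H :=
  match k with 0 => conjpre (e 0) V | k.+1 => Cs e V k `&` conjpre (e k.+1) V end.

Lemma CsP e V k x : Cs e V k x <-> forall j, (j <= k)%N -> conjpre (e j) V x.
Proof.
elim: k => [|k IH] /=.
  split=> [h j|h]; last exact: h.
  by rewrite leqn0 => /eqP ->.
split=> [[/IH h1 h2] j|h].
  rewrite leq_eqVlt => /orP[/eqP->//|]; rewrite ltnS; exact: h1.
split; last exact: h.
by apply/IH => j jk; apply: h; rewrite (leq_trans jk).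
Qed.

Lemma open_Cs e V k : open V -> open (Cs e V k).
Proof.
move=> oV; elim: k => [|k IH] /=; first exact: open_conjpre.
by apply: openI => //; exact: open_conjpre.
Qed.

Definition good_step (e : nat -> H) (V : set H) (k : nat) (W : set H) :=
  [/\ open W, W one, (forall x, W x -> W (inv x)),
      (forall a b, W a -> W b -> V (a * b)) &
      (forall j x, (j <= k)%N -> W x -> V (e j * x * inv (e j)))].

Lemma step_ex e V k : open V -> V one -> exists W, good_step e V k W.
Proof.
move=> oV V1; have [W0 [oW0 W01 W0V]] := @nbhs_sq V oV V1.
pose W1 := W0 `&` Cs e V k.
have oW1 : open W1 by apply: openI => //; exact: open_Cs.
have W11 : W1 one.
  split=> //; apply/CsP => j _; rewrite /conjpre /= (g1r TG) (gVr TG) //.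
exists (W1 `&` inv @^-1` W1); split.
- apply: openI => //; apply: open_pre => //; exact: (inv_cont TG).
- by split=> //=; rewrite (gV1 TG).
- by move=> x [h1 h2]; split=> //=; rewrite (gVK TG).
- by move=> a b [[h _] _] [[h' _] _]; exact: W0V.
- by move=> j x jk [[_ /CsP h] _]; exact: h.
Qed.

Definition nxt (e : nat -> H) (V : set H) (k : nat) : set H :=
  match pselect (open V /\ V one) with
  | left p => projT1 (cid (@step_ex e V k (proj1 p) (proj2 p)))
  | right _ => V end.

Lemma nxtP e V k : open V -> V one -> good_step e V k (nxt e V k).
Proof.
move=> oV V1; rewrite /nxt; case: pselect => [p|[]//].
exact: (projT2 (cid _)).
Qed.

Fixpoint Useq (e : nat -> H) (V : set H) (k : nat) : set H :=
  match k with 0 => V | k.+1 => nxt e (Useq e V k) k end.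

Lemma Useq_ok e V : open V -> V one -> forall k,
  open (Useq e V k) /\ Useq e V k one.
Proof.
move=> oV V1 k; elim: k => [|k IH] //=.
case: IH => hO1 hO2.
by have [] := @nxtP e _ k hO1 hO2.
Qed.

Lemma UseqS e V k : open V -> V one -> good_step e (Useq e V k) k (Useq e V k.+1).
Proof. by move=> oV V1; have [hO1 hO2] := @Useq_ok e V oV V1 k; exact: nxtP. Qed.

End Nb.


Section Nsub.
Context {H : topologicalType} {mul : H -> H -> H} {inv : H -> H} {one : H}.
Hypothesis TG : topological_group mul inv one.
Local Notation "x * y" := (mul x y).
Variables (e : nat -> H) (A : set H) (V : H -> set H).
Hypothesis oV : forall a, A a -> open (V a).
Hypothesis V1 : forall a, A a -> V a one.

Definition Ug a k := Useq TG e (V a) k.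

Lemma U_open a k : A a -> open (Ug a k).
Proof. by move=> Aa; case: (Useq_ok TG e (V a) (oV _ Aa) (V1 _ Aa) k). Qed.
Lemma U_one a k : A a -> Ug a k one.
Proof. by move=> Aa; case: (Useq_ok TG e (V a) (oV _ Aa) (V1 _ Aa) k). Qed.
Lemma U_sym {a k x} : A a -> Ug a k.+1 x -> Ug a k.+1 (inv x).
Proof. by move=> Aa; case: (UseqS TG e (V a) k (oV _ Aa) (V1 _ Aa)) => _ _ h _ _; exact: h. Qed.
Lemma U_mul {a k x y} : A a -> Ug a k.+1 x -> Ug a k.+1 y -> Ug a k (x * y).
Proof. by move=> Aa; case: (UseqS TG e (V a) k (oV _ Aa) (V1 _ Aa)) => _ _ _ h _; exact: h. Qed.
Lemma U_conj {a k j x} : A a -> (j <= k)%N -> Ug a k.+1 x -> Ug a k (e j * x * inv (e j)).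
Proof. by move=> Aa; case: (UseqS TG e (V a) k (oV _ Aa) (V1 _ Aa)) => _ _ _ _ h; exact: h. Qed.
Lemma U_S {a k x} : A a -> Ug a k.+1 x -> Ug a k x.
Proof. by move=> Aa h; rewrite -(g1r TG x); apply: U_mul => //; exact: U_one. Qed.
Lemma U_mono {a} k l {x} : A a -> (k <= l)%N -> Ug a l x -> Ug a k x.
Proof.
move=> Aa /subnK <-; elim: (l - k)%N => [|m IH] //= h.
by apply: IH; apply: U_S.
Qed.

Definition Nset := [set x | forall a, A a -> forall k, Ug a k x].

Lemma N_one : Nset one. Proof. by move=> a Aa k; exact: U_one. Qed.
Lemma N_mul x y : Nset x -> Nset y -> Nset (x * y).
Proof. by move=> hx hy a Aa k; apply: U_mul => //; [exact: hx|exact: hy]. Qed.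
Lemma N_inv x : Nset x -> Nset (inv x).
Proof. by move=> hx a Aa k; apply: U_S => //; apply: U_sym => //; exact: hx. Qed.
Lemma UN a k x y : A a -> Ug a k.+1 x -> Nset y -> Ug a k (x * y).
Proof. by move=> Aa hx hy; apply: U_mul => //; exact: hy. Qed.

Lemma N_closed : closed Nset.
Proof.
rewrite closure_id; apply/seteqP; split; first exact: subset_closure.
move=> x cx a Aa k.
have hO : open [set y | Ug a k.+1 (inv x * y)].
  have -> : [set y | Ug a k.+1 (inv x * y)] = (fun y => inv x * y) @^-1` Ug a k.+1 by [].
  by apply: open_pre; [exact: (lmul_cont TG)|exact: U_open].
have hx : [set y | Ug a k.+1 (inv x * y)] x by rewrite /= (gVl TG); exact: U_one.
have [y [Ny /= hy]] := cx _ (open_nbhs_nbhs (conj hO hx)).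
have := U_mul Aa (Ny a Aa k.+1) (U_sym Aa hy).
by rewrite (gVM TG) (gVK TG) (gKVl TG).
Qed.

Hypothesis De : forall g (W : set H), open W -> W g -> exists j, W (e j).

Lemma N_normal g x : Nset x -> Nset (g * x * inv g).
Proof.
move=> Nx a Aa n.
have hO : open [set y | Ug a n.+2 (y * inv g)].
  have -> : [set y | Ug a n.+2 (y * inv g)] = (fun y => y * inv g) @^-1` Ug a n.+2 by [].
  by apply: open_pre; [exact: (rmul_cont TG)|exact: U_open].
have [j hj] : exists j, Ug a n.+2 (e j * inv g).
  by apply: (De g _ hO); rewrite /= (gVr TG); exact: U_one.
set w := e j * inv g in hj.
have eg : g = inv w * e j by rewrite /w (gVM TG) (gVK TG) (gKVr TG).
have hy : Ug a n.+2 (e j * x * inv (e j)).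
  apply: (U_mono n.+2 (maxn j n.+2)) => //; first exact: leq_maxr.
  apply: U_conj => //; first exact: leq_maxl.
  exact: Nx.
have e2 : g * x * inv g = inv w * ((e j * x * inv (e j)) * w).
  rewrite eg (gVM TG) (gVK TG) !(gA TG) //.
rewrite e2; apply: U_mul => //; first by apply: U_S => //; apply: U_sym.
exact: U_mul.
Qed.

End Nsub.


Lemma countable_sub T (A B : set T) : A `<=` B -> countable B -> countable A.
Proof. by move=> AB; apply: sub_countable; exact: subset_card_le. Qed.

Lemma countable_img T Ug (f : T -> Ug) (A : set T) : countable A -> countable (f @` A).
Proof. by apply: sub_countable; exact: card_image_le. Qed.

Lemma countable_U2 T (A B : set T) : countable A -> countable B -> countable (A `|` B).
Proof.
move=> cA cB.
apply: (@countable_sub _ _ (\bigcup_(i in [set: bool]) (if i then A else B))).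
  by move=> x [Ax|Bx]; [exists true|exists false].
by apply: bigcup_countable => // -[].
Qed.

Section Img.
Variables (X Y : Type) (f : X -> Y) (S : set X).

Lemma card_img : card_le_omega1 S -> card_le_omega1 (f @` S).
Proof.
move=> [r [irr [tr [tot [mn seg]]]]].
pose mp y x := [/\ S x, f x = y & forall b, S b -> f b = y -> ~ r b x].
have mp_ex y : (f @` S) y -> exists x, mp y x.
  move=> [x0 Sx0 <-].
  have [||x [Sx fx] h] := mn [set x | S x /\ f x = f x0].
  - by move=> x [].
  - by exists x0.
  by exists x; split => // b Sb fb; apply: h.
have mp_un y x x' : mp y x -> mp y x' -> x = x'.
  move=> [Sx fx hx] [Sx' fx' hx'].
  by case: (tot _ _ Sx Sx') => [//|[h|h]]; [case: (hx' x)|case: (hx x')].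
pose r' y1 y2 := exists x1 x2, [/\ mp y1 x1, mp y2 x2 & r x1 x2].
exists r'; split; [|split; [|split; [|split]]].
- move=> y _ [x1 [x2 [m1 m2 rr]]].
  by rewrite (mp_un _ _ _ m1 m2) in rr; exact: (irr x2 (let: And3 s _ _ := m2 in s)).
- move=> a b c _ _ _ [x1 [x2 [m1 m2 r12]]] [x2' [x3 [m2' m3 r23]]].
  rewrite -(mp_un _ _ _ m2 m2') in r23.
  exists x1, x3; split => //; apply: (tr x1 x2 x3) => //.
  + by case: m1.
  + by case: m2.
  + by case: m3.
- move=> a b ia ib.
  have [x1 m1] := mp_ex _ ia; have [x2 m2] := mp_ex _ ib.
  have [S1 f1 _] := m1; have [S2 f2 _] := m2.
  case: (tot _ _ S1 S2) => [e|[h|h]].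
  + by left; rewrite -f1 -f2 e.
  + by right; left; exists x1, x2.
  + by right; right; exists x2, x1.
- move=> B BS [y0 By0].
  have [||x [y [By mxy]] h] := mn [set x | exists y, B y /\ mp y x].
  + by move=> x [y [_ []]].
  + have [x m] := mp_ex _ (BS _ By0); by exists x, y0.
  exists y => // b Bb [xb [xy [mb my rb]]].
  rewrite -(mp_un _ _ _ mxy my) in rb.
  by apply: (h xb) => //; exists b.
- move=> y iy.
  have [x0 m0] := mp_ex _ iy.
  apply: (@countable_sub _ _ (f @` [set b | S b /\ r b x0])); last first.
    by apply/countable_img/seg; case: m0.
  move=> z [iz [x1 [x2 [m1 m2 r12]]]].
  rewrite (mp_un _ _ _ m2 m0) in r12.
  have [S1 f1 _] := m1.
  by exists x1.
Qed.
End Img.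

Section Prod.
Variables (X : Type) (S : set X).

Lemma card_prodnat : card_le_omega1 S -> card_le_omega1 (S `*` [set: nat]).
Proof.
move=> [r [irr [tr [tot [mn seg]]]]].
pose r' (p q : X * nat) := r p.1 q.1 \/ (p.1 = q.1 /\ (p.2 < q.2)%N).
exists r'; split; [|split; [|split; [|split]]].
- move=> [a n] [/= Sa _] [/= h|[_ h]]; [exact: (irr a)|by rewrite ltnn in h].
- move=> [a n] [b m] [c k] [/= Sa _] [/= Sb _] [/= Sc _].
  rewrite /r' /= => -[h1|[e1 h1]] [h2|[e2 h2]].
  + by left; apply: (tr a b c).
  + by left; rewrite -e2.
  + by left; rewrite e1.
  + by right; split; [rewrite e1|exact: ltn_trans h2].
- move=> [a n] [b m] [/= Sa _] [/= Sb _]; rewrite /r' /=.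
  case: (tot a b Sa Sb) => [e|[h|h]]; last by right; right; left.
    2: by right; left; left.
  subst b; case: (ltngtP n m) => h.
  + by right; left; right.
  + by right; right; right.
  + by left; rewrite h.
- move=> B BS [[a0 n0] B0].
  have [||a [p Bp pa] ha] := mn (fst @` B).
  + by move=> a [p /BS [Sp _] <-].
  + by exists a0, (a0, n0).
  have exn : exists n, B (a, n) by exists p.2; rewrite -pa -surjective_pairing.
  have exn' : exists n, `[< B (a, n) >] by case: exn => k h; exists k; apply/asboolP.
  pose n := ex_minn exn'.
  have Bn : B (a, n) by rewrite /n; case: ex_minnP => k /asboolP.
  have nmin m : B (a, m) -> (n <= m)%N.
    by move=> Bm; rewrite /n; case: ex_minnP => k _; apply; apply/asboolP.
  exists (a, n) => // -[b m] Bbm; rewrite /r' /= => -[h|[e h]].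
  + by apply: (ha b) => //; exists (b, m).
  + by subst b; have := nmin _ Bbm; rewrite leqNgt h.
- move=> [a n] [/= Sa _].
  apply: (@countable_sub _ _ ([set b | S b /\ r b a] `*` [set: nat] `|` [set a] `*` [set: nat])).
    move=> [b m] [[/= Sb _]]; rewrite /r' /= => -[h|[e _]].
    + by left.
    + by right.
  apply: countable_U2.
  + by apply: countableX => //; exact: seg.
  + by apply: countableX => //; exact: countable1.
Qed.
End Prod.


Section Quo.
Context {H : topologicalType} {mul : H -> H -> H} {inv : H -> H} {one : H}.
Hypothesis TG : topological_group mul inv one.
Local Notation "x * y" := (mul x y).
Variable N : set H.
Hypothesis N1 : N one.
Hypothesis NM : forall x y, N x -> N y -> N (x * y).
Hypothesis NV : forall x, N x -> N (inv x).

Local Notation Q := (coset_space mul N).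
Local Notation pi := (coset_proj mul N).

Lemma openQ (O : set Q) : open O <-> open (pi @^-1` O).
Proof. by []. Qed.

Lemma pi_eq g h : N (inv g * h) -> pi g = pi h.
Proof.
move=> Ngh.
have e : lcoset mul g N = lcoset mul h N.
  apply/seteqP; split=> _ [n Nn <-].
  - exists (inv (inv g * h) * n); first by apply: NM => //; exact: NV.
    by rewrite (gVM TG) (gVK TG) (gA TG) (gKVl TG).
  - exists (inv g * h * n); first exact: NM.
    by rewrite (gA TG) (gKVl TG).
rewrite /coset_proj; move: (ex_intro _ g _) (ex_intro _ h _); rewrite e => p q.
by congr exist.
Qed.

Lemma pi_eqP g h : pi g = pi h -> N (inv g * h).
Proof.
move=> /(congr1 sval) /= e.
have : lcoset mul h N h by exists one => //; rewrite (g1r TG).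
rewrite -e => -[n Nn <-]; by rewrite (gKl TG).
Qed.

Lemma pi_surj (z : Q) : exists g, z = pi g.
Proof.
case: z => S [g e]; exists g; subst S; rewrite /coset_proj.
by congr exist.
Qed.

Lemma pi_imgP S x : (pi @` S) (pi x) <-> exists s, S s /\ N (inv s * x).
Proof.
split=> [[s Ss /pi_eqP h]|[s [Ss h]]]; first by exists s.
by exists s => //; exact: pi_eq.
Qed.

Lemma pi_img_open S : open S -> open (pi @` S).
Proof.
move=> oS; apply/openQ.
have -> : pi @^-1` (pi @` S) = \bigcup_(n in N) ((fun x => x * inv n) @^-1` S).
  apply/seteqP; split=> x.
  - move=> /pi_imgP [s [Ss Nsx]]; exists (inv s * x) => //=.
    by rewrite (gVM TG) (gVK TG) (gA TG) (gVr TG) (g1l TG).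
  - move=> [n Nn /= Sxn]; apply/pi_imgP; exists (x * inv n); split => //.
    by rewrite (gVM TG) (gVK TG) (gKVr TG).
apply: bigcup_open => n _; apply: open_pre => //; exact: (rmul_cont TG).
Qed.

End Quo.


Lemma enum_dense (H : topologicalType) (D : set H) (h0 : H) :
  countable D -> dense D ->
  exists e : nat -> H, forall g (W : set H), open W -> W g -> exists j, W (e j).
Proof.
move=> /countable_injP [f finj] dD.
pose e j := match pselect (exists d, D d /\ f d = j) with
  | left p => projT1 (cid p) | right _ => h0 end.
exists e => g W oW Wg.
have [d [Wd Dd]] := dD W (ex_intro _ g Wg) oW.
exists (f d); rewrite /e; case: pselect => [p|[]]; last by exists d.
case: (cid p) => d' [Dd' fd'] /=.
by rewrite (finj d' d) // inE.
Qed.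

Theorem lemma17 (H : topologicalType)
  (mul : H -> H -> H) (inv : H -> H) (one : H) :
  topological_group mul inv one ->
  hausdorff_space H -> regular_space H ->
  separable H ->
  omega1_collapsible mul inv one ->
  forall A : set H, card_le_omega1 A -> lindelof_subspace A.
Proof.
move=> TG _ _ [D cD dD] coll A cA I Uc oU cov.
case: (pselect (A !=set0)) => [[a0 Aa0]|nA]; last first.
  exists set0 => // a Aa; case: nA; by exists a.
have [i0 _ Ui0] := cov a0 Aa0.
pose iof a := match pselect (exists i, Uc i a) with
  | left p => projT1 (cid p) | right _ => i0 end.
have iofP a : A a -> Uc (iof a) a.
  move=> Aa; rewrite /iof; case: pselect => [p|[]].
  - exact: (projT2 (cid p)).
  - by have [i _ ?] := cov a Aa; exists i.
pose V a := [set y | Uc (iof a) (mul a y)].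
have oV : forall a, A a -> open (V a).
  move=> a _; apply: open_pre; [exact: (lmul_cont TG)|exact: oU].
have V1 : forall a, A a -> V a one by move=> a Aa; rewrite /V /= (g1r TG); exact: iofP.
have [e De] := @enum_dense _ _ one cD dD.
pose N := Nset TG e A V.
have cnN : closed_normal_subgroup mul inv one N.
  split.
  - exact: N_one.
  - exact: N_mul.
  - exact: N_inv.
  - by move=> g n Nn; exact: N_normal.
  - exact: N_closed.
have [N1 NM NV Nn Nc] := cnN.
have piE := pi_eq TG N NM NV.
have piEP := pi_eqP TG N N1.
have piI := pi_imgP TG N N1 NM NV.
have piO := pi_img_open TG N N1 NM NV.
pose Uu := Ug TG e V.
have Uopen : forall a k, A a -> open (Uu a k) := U_open TG e A V oV V1.
have Uone : forall a k, A a -> Uu a k one := U_one TG e A V oV V1.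
have UNl : forall a k x y, A a -> Uu a k.+1 x -> N y -> Uu a k (mul x y) :=
  UN TG e A V oV V1.
pose pi := coset_proj mul N.
pose S g a k := [set y | Uu a k (mul (inv g) y)].
have Sopen g a k : A a -> open (S g a k).
  move=> Aa; apply: open_pre; [exact: (lmul_cont TG)|exact: Uopen].
have Sg g a k : A a -> S g a k g by move=> Aa; rewrite /S /= (gVl TG); exact: Uone.
have Sback g a k x : A a -> (pi @` S g a k.+1) (pi x) -> Uu a k (mul (inv g) x).
  move=> Aa /piI [s [Ss Nsx]].
  by have := UNl _ _ _ _ Aa Ss Nsx; rewrite -(gA TG) (gKVl TG).
have psi : pseudocharacter_le_omega1 (coset_space mul N).
  move=> z; have [g ->] := pi_surj N z.
  exists ((fun p => pi @` S g p.1 p.2) @` (A `*` [set: nat])); split.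
  - exact/card_img/card_prodnat.
  - move=> W [[a k] [/= Aa _] <-]; split; first exact/piO/Sopen.
    by exists g => //; exact: Sg.
  - apply/seteqP; split=> w.
    + move=> hw; have [x ew] := pi_surj N w; subst w.
      rewrite /=; apply: esym; apply: piE => a Aa k.
      apply: (Sback g a k x Aa); apply: (hw (pi @` S g a k.+1)).
      by exists (a, k.+1).
    + move=> -> W [[a k] [/= Aa _] <-].
      by exists g => //; exact: Sg.
have [d [d0 d00 dsym dtri dopen]] := coll N cnN psi.
pose O a := pi @` S a a 1%N.
have Oopen a : A a -> open (O a) by move=> Aa; apply/piO/Sopen.
have Oa a : A a -> O a (pi a) by move=> Aa; exists a => //; exact: Sg.
have Osub a x : A a -> O a (pi x) -> Uc (iof a) x.
  move=> Aa h; have := Sback a a 0%N x Aa h.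
  by rewrite /Uu /Ug /= /V /= (gKVl TG).
pose B p r := [set y | Rlt (d p y) r].
have dpp p : d p p = 0%R by apply/(d00 p p).
have Bopen p r : open (B p r).
  apply/(dopen _).2 => y hy; exists (r - d p y)%R; first by rewrite /B /= in hy; lra.
  move=> z /= hz; have := dtri p y z; rewrite /B /= in hy *; lra.
have Bmeet a r : Rlt 0 r -> exists x, D x /\ B (pi a) r (pi x).
  move=> r0.
  have oB : open (pi @^-1` B (pi a) r) := Bopen (pi a) r.
  have ha : (pi @^-1` B (pi a) r) a.
    by rewrite /preimage /B /= dpp.
  have [x [Bx Dx]] := dD _ (ex_intro _ a ha) oB.
  by exists x.
pose rad m := Rinv (INR m.+1).
have radpos m : Rlt 0 (rad m).
  by apply: Rinv_0_lt_compat; apply: lt_0_INR; apply/ltP.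
pose Good x m a := [/\ A a, Rlt (d (pi x) (pi a)) (rad m) & B (pi x) (rad m) `<=` O a].
pose ch x m := match pselect (exists a, Good x m a) with
  | left p => projT1 (cid p) | right _ => a0 end.
have chP x m : (exists a, Good x m a) -> Good x m (ch x m).
  move=> h; rewrite /ch; case: pselect => [p|//].
  exact: (projT2 (cid p)).
exists ((fun p => iof (ch p.1 p.2)) @` [set p | D p.1 /\ exists a, Good p.1 p.2 a]).
  apply: countable_img; apply: (@countable_sub _ _ (D `*` [set: nat])).
    by move=> p [].
  exact: countableX.
move=> a Aa.
have [eps eps0 sub] := (dopen (O a)).1 (Oopen a Aa) (pi a) (Oa a Aa).
have [M [hM M0]] := archimed_cor1 (eps / 2) (ltac:(lra)).
have eM : (M.-1).+1 = M by apply: prednK; apply/ltP.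
pose m := M.-1.
have radm : rad m = Rinv (INR M) by rewrite /rad /m eM.
have [x [Dx Bx]] := Bmeet a (rad m) (radpos m).
have G : Good x m a.
  split => //; first by rewrite dsym.
  move=> y /= hy; apply: sub => /=.
  have := dtri (pi a) (pi x) y; rewrite /B /= in Bx hy; rewrite radm in Bx hy; lra.
have [Aa' _ sub'] := chP x m (ex_intro _ a G).
exists (iof (ch x m)).
  by exists (x, m) => //; split => //; exists a.
apply: Osub => //; apply: sub' => /=.
by rewrite /B /= dsym.
Qed.
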